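(* For real numbers $u>z\ge 10$ let $$c(z,u)=\sum\frac{1}{(n_1n_2n_3n_4)^{3/4}}\prod_{j=1}^4\min\!\left(\frac{\sqrt{n_j}}{\sqrt z},1\right),$$ where the sum is over positive integers $n_1,n_2,n_3,n_4\le u$ satisfying $\sqrt{n_1}+\sqrt{n_2}=\sqrt{n_3}+\sqrt{n_4}$, $n_1\ne n_3$ and $n_1\ne n_4$. Then $c(z,u)\ll z^{-3/2}$ uniformly for $u>z\ge 10$.
   Context: $f\ll g$ means $|f|\le Cg$ for some absolute positive constant $C$. *)

(* Defs.v *)
From Stdlib Require Import Reals List ZArith Arith.
Open Scope R_scope.

Definition sumR (M : nat) (f : nat -> R) : R :=
  fold_right Rplus 0 (map f (seq 1 M)).

Definition wt (z : R) (n : nat) : R := Rmin (sqrt (INR n) / sqrt z) 1.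

Definition term (z : R) (n1 n2 n3 n4 : nat) : R :=
  / Rpower (INR n1 * INR n2 * INR n3 * INR n4) (3/4)
  * (wt z n1 * wt z n2 * wt z n3 * wt z n4).

(* indicator of the summation conditions (positivity is built into sumR) *)
Definition admissible (u : R) (n1 n2 n3 n4 : nat) : bool :=
  (if Rle_dec (INR n1) u then true else false) &&
  (if Rle_dec (INR n2) u then true else false) &&
  (if Rle_dec (INR n3) u then true else false) &&
  (if Rle_dec (INR n4) u then true else false) &&
  (if Req_EM_T (sqrt (INR n1) + sqrt (INR n2)) (sqrt (INR n3) + sqrt (INR n4))
   then true else false) &&
  negb (Nat.eqb n1 n3) && negb (Nat.eqb n1 n4).

(* c(z,u); indices range over 1..up(u), which contains all n <= u *)
Definition c_zu (z u : R) : R :=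
  let M := Z.to_nat (up u) in
  sumR M (fun n1 => sumR M (fun n2 => sumR M (fun n3 => sumR M (fun n4 =>
    if admissible u n1 n2 n3 n4 then term z n1 n2 n3 n4 else 0)))).

(* Main.v *)
Require Import Defs.
From Stdlib Require Import Reals List Lia Lra Psatz Arith ZArith Classical ClassicalEpsilon.
Open Scope R_scope.
Open Scope R_scope.

Definition lsum {X} (l : list X) (F : X -> R) : R := fold_right Rplus 0 (map F l).

Lemma lsum_app {X} (l1 l2 : list X) F : lsum (l1 ++ l2) F = lsum l1 F + lsum l2 F.
Proof. unfold lsum; induction l1; simpl; [lra|]. rewrite IHl1; lra. Qed.

Lemma lsum_map {X Y} (l : list X) (g : X -> Y) F : lsum (map g l) F = lsum l (fun x => F (g x)).
Proof. unfold lsum; rewrite map_map; reflexivity. Qed.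

Lemma lsum_ext {X} (l : list X) F G : (forall x, In x l -> F x = G x) -> lsum l F = lsum l G.
Proof. unfold lsum; induction l; simpl; intros H; [lra|]. rewrite H by auto. rewrite IHl; auto. Qed.

Lemma lsum_le {X} (l : list X) F G : (forall x, In x l -> F x <= G x) -> lsum l F <= lsum l G.
Proof. unfold lsum; induction l; simpl; intros H; [lra|]. 
  assert (F a <= G a) by auto. assert (fold_right Rplus 0 (map F l) <= fold_right Rplus 0 (map G l)) by auto. lra. Qed.

Lemma lsum_nonneg {X} (l : list X) F : (forall x, In x l -> 0 <= F x) -> 0 <= lsum l F.
Proof. unfold lsum; induction l; simpl; intros H; [lra|].
  assert (0 <= F a) by auto. assert (0 <= fold_right Rplus 0 (map F l)) by auto. lra. Qed.

Lemma lsum_prod {X Y} (l1 : list X) (l2 : list Y) (F : X -> Y -> R) :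
  lsum l1 (fun a => lsum l2 (F a)) = lsum (list_prod l1 l2) (fun p => F (fst p) (snd p)).
Proof. induction l1; simpl; [reflexivity|].
  rewrite lsum_app, lsum_map. simpl. rewrite <- IHl1. unfold lsum at 1. simpl. reflexivity. Qed.

Lemma NoDup_prod {X Y} (l1 : list X) (l2 : list Y) : NoDup l1 -> NoDup l2 -> NoDup (list_prod l1 l2).
Proof. induction l1; simpl; intros H1 H2; [constructor|]. inversion H1; subst.
  apply NoDup_app.
  - apply NoDup_map_NoDup_ForallPairs; auto. intros x y _ _ E. inversion E; auto.
  - auto.
  - intros [p1 p2] Hi Hi2. apply in_map_iff in Hi. destruct Hi as [y [Ey _]]. inversion Ey; subst.
    apply in_prod_iff in Hi2. tauto.
Qed.

Lemma lsum_extract {Y} (l : list Y) (G : Y -> R) y :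
  In y l -> exists l', lsum l G = G y + lsum l' G /\ (forall y', In y' l' -> In y' l) /\ (NoDup l -> NoDup l' /\ forall y', In y' l -> y' <> y -> In y' l').
Proof. intros Hy. destruct (in_split _ _ Hy) as [la [lb E]]. subst l.
  exists (la ++ lb). split.
  - rewrite !lsum_app. unfold lsum at 2. simpl. unfold lsum. lra.
  - split. intros y' Hi; apply in_app_or in Hi; apply in_or_app; simpl; tauto.
    intros ND. split. eapply NoDup_remove_1; eauto.
    intros y' Hi Hne. apply in_app_or in Hi. apply in_or_app. destruct Hi as [Hi|Hi]; auto.
    simpl in Hi. destruct Hi; [congruence|auto].
Qed.

Lemma lsum_inj {X Y} (l1 : list X) (l2 : list Y) (F : X -> R) (G : Y -> R) (phi : X -> Y) :
  NoDup l1 -> NoDup l2 -> (forall x, In x l1 -> 0 <= F x) -> (forall y, In y l2 -> 0 <= G y) ->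
  (forall x, In x l1 -> F x <> 0 -> In (phi x) l2 /\ F x <= G (phi x)) ->
  (forall x x', In x l1 -> In x' l1 -> F x <> 0 -> F x' <> 0 -> phi x = phi x' -> x = x') ->
  lsum l1 F <= lsum l2 G.
Proof.
  revert l2. induction l1 as [|x l1 IH]; intros l2 N1 N2 HF HG Hm Hi.
  - unfold lsum; simpl. apply lsum_nonneg; auto.
  - inversion N1; subst. unfold lsum at 1; simpl. fold (lsum l1 F).
    destruct (Req_EM_T (F x) 0) as [E|E].
    + rewrite E. rewrite Rplus_0_l. apply IH; auto. intros; apply HF; simpl; auto.
      intros; apply Hm; simpl; auto. intros; apply Hi; simpl; auto.
    + destruct (Hm x (or_introl eq_refl) E) as [Hin Hle].
      destruct (lsum_extract l2 G (phi x) Hin) as [l' [El' [Hsb Hl']]]. destruct (Hl' N2) as [N' Hsub].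
      rewrite El'. assert (lsum l1 F <= lsum l' G); [|lra].
      apply IH.
      * auto.
      * auto.
      * intros; apply HF; simpl; auto.
      * intros y Hy. apply HG. auto.
      * intros x' Hx' Ex'. destruct (Hm x' (or_intror Hx') Ex') as [A B]. split; auto.
      apply Hsub; auto. intro Ee. apply H1. assert (x' = x). apply Hi; simpl; auto. subst; auto.
      * intros; apply Hi; simpl; auto.
Qed.
Open Scope R_scope.

Lemma sumR_lsum M f : sumR M f = lsum (seq 1 M) f.
Proof. reflexivity. Qed.

Lemma sumR_0 f : sumR 0 f = 0.
Proof. reflexivity. Qed.

Lemma sumR_S M f : sumR (S M) f = sumR M f + f (S M).
Proof. rewrite !sumR_lsum, seq_S, lsum_app. unfold lsum at 2; simpl. replace (1 + M)%nat with (S M) by lia. lra. Qed.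

Lemma sumR_le M f g : (forall i, (1 <= i <= M)%nat -> f i <= g i) -> sumR M f <= sumR M g.
Proof. intros H; rewrite !sumR_lsum; apply lsum_le. intros x Hx; apply in_seq in Hx; apply H; lia. Qed.

Lemma sumR_ext M f g : (forall i, (1 <= i <= M)%nat -> f i = g i) -> sumR M f = sumR M g.
Proof. intros H; rewrite !sumR_lsum; apply lsum_ext. intros x Hx; apply in_seq in Hx; apply H; lia. Qed.

Lemma sumR_nonneg M f : (forall i, (1 <= i <= M)%nat -> 0 <= f i) -> 0 <= sumR M f.
Proof. intros H; rewrite !sumR_lsum; apply lsum_nonneg. intros x Hx; apply in_seq in Hx; apply H; lia. Qed.

Lemma sumR_plus M f g : sumR M (fun i => f i + g i) = sumR M f + sumR M g.
Proof. induction M. rewrite !sumR_0; lra. rewrite !sumR_S, IHM. lra. Qed.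

Lemma sumR_scal M c f : sumR M (fun i => c * f i) = c * sumR M f.
Proof. induction M. rewrite !sumR_0; lra. rewrite !sumR_S, IHM. lra. Qed.

Lemma sumR_zero M : sumR M (fun _ => 0) = 0.
Proof. induction M. reflexivity. rewrite sumR_S, IHM; lra. Qed.

Lemma sumR_swap M N (F : nat -> nat -> R) :
  sumR M (fun i => sumR N (fun j => F i j)) = sumR N (fun j => sumR M (fun i => F i j)).
Proof. induction M. rewrite sumR_0. symmetry; apply sumR_zero.
  rewrite sumR_S, IHM. rewrite <- sumR_plus. apply sumR_ext; intros; rewrite sumR_S; reflexivity. Qed.

Lemma sumR_prod M f g : sumR M (fun a => sumR M (fun b => f a * g b)) = sumR M f * sumR M g.
Proof. rewrite <- (sumR_ext M (fun a => f a * sumR M g)). rewrite Rmult_comm, <- sumR_scal.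
  apply sumR_ext; intros; lra. intros; rewrite sumR_scal; reflexivity. Qed.

Lemma sum_single M e X : 0 <= X -> sumR M (fun d => if Nat.eqb d e then X else 0) <= X.
Proof. intros HX.
  assert (forall M, sumR M (fun d => if Nat.eqb d e then X else 0) <= if Nat.leb e M then X else 0).
  { induction M0. rewrite sumR_0. destruct (Nat.leb e 0); lra.
    rewrite sumR_S. destruct (Nat.eqb (S M0) e) eqn:E.
    - apply Nat.eqb_eq in E. subst. rewrite Nat.leb_refl.
      assert (Nat.leb (S M0) M0 = false) by (apply Nat.leb_gt; lia). rewrite H in IHM0. lra.
    - apply Nat.eqb_neq in E. destruct (Nat.leb e M0) eqn:E1.
      + apply Nat.leb_le in E1. assert (Nat.leb e (S M0) = true) by (apply Nat.leb_le; lia). rewrite H; lra.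
      + destruct (Nat.leb e (S M0)); lra. }
  specialize (H M). destruct (Nat.leb e M); lra.
Qed.

Lemma sum_dc M (p : nat -> bool) (h H : nat -> R) B :
  (forall n, p (S n) = true -> p n = true) ->
  (forall c, (1 <= c)%nat -> h c <= H c - H (c - 1)%nat) -> H 0%nat = 0 ->
  (forall n, p n = true -> H n <= B) -> 0 <= B ->
  sumR M (fun c => if p c then h c else 0) <= B.
Proof. intros Hd Hh H0 HB B0.
  assert (forall M, sumR M (fun c => if p c then h c else 0) <= if p M then H M else B).
  { induction M0. rewrite sumR_0. destruct (p 0%nat); lra.
    rewrite sumR_S. destruct (p (S M0)) eqn:E.
    - rewrite (Hd _ E) in IHM0. specialize (Hh (S M0)). replace (S M0 - 1)%nat with M0 in Hh by lia.
      assert (h (S M0) <= H (S M0) - H M0) by (apply Hh; lia). lra.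
    - destruct (p M0) eqn:E2. specialize (HB M0 E2). lra. lra. }
  specialize (H1 M). destruct (p M) eqn:E. specialize (HB M E); lra. lra.
Qed.

Lemma sum_uc M (p : nat -> bool) (h G : nat -> R) B :
  (forall n, p n = true -> p (S n) = true) ->
  (forall c, (1 <= c)%nat -> h c <= G c - G (S c)) -> (forall n, (1 <= n)%nat -> 0 <= G n) ->
  (forall n, (1 <= n)%nat -> p n = true -> G n <= B) -> 0 <= B ->
  sumR M (fun c => if p c then h c else 0) <= B.
Proof. intros Hu Hh G0 HB B0.
  assert (forall M, sumR M (fun c => if p c then h c else 0) <= if p M then B - G (S M) else 0).
  { induction M0. rewrite sumR_0. destruct (p 0%nat) eqn:E. pose proof (HB 1%nat (le_n _) (Hu _ E)). lra. lra.
    rewrite sumR_S. destruct (p (S M0)) eqn:E.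
    - assert (h (S M0) <= G (S M0) - G (S (S M0))) by (apply Hh; lia).
      destruct (p M0) eqn:E2. lra. pose proof (HB (S M0) ltac:(lia) E). lra.
    - destruct (p M0) eqn:E2. rewrite (Hu _ E2) in E; discriminate. lra. }
  specialize (H M). destruct (p M). pose proof (G0 (S M) ltac:(lia)). lra. lra.
Qed.

Definition L4 M := list_prod (list_prod (list_prod (seq 1 M) (seq 1 M)) (seq 1 M)) (seq 1 M).

Lemma sum4_eq M (F : nat -> nat -> nat -> nat -> R) :
  sumR M (fun a => sumR M (fun b => sumR M (fun c => sumR M (fun d => F a b c d)))) =
  lsum (L4 M) (fun x => F (fst (fst (fst x))) (snd (fst (fst x))) (snd (fst x)) (snd x)).
Proof. unfold L4.
  refine (eq_trans (lsum_prod (seq 1 M) (seq 1 M) (fun a b => sumR M (fun c => sumR M (fun d => F a b c d)))) _).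
  refine (eq_trans (lsum_prod _ (seq 1 M) (fun p c => sumR M (fun d => F (fst p) (snd p) c d))) _).
  refine (eq_trans (lsum_prod _ (seq 1 M) (fun p d => F (fst (fst p)) (snd (fst p)) (snd p) d)) _).
  reflexivity.
Qed.

Lemma NoDup_L4 M : NoDup (L4 M).
Proof. unfold L4. repeat apply NoDup_prod; apply seq_NoDup. Qed.
Open Scope R_scope.

Definition p4 (x : R) : R := sqrt (sqrt x).
Definition t (m : nat) : R := p4 (INR m).

Lemma p4_nonneg x : 0 <= p4 x.
Proof. apply sqrt_pos. Qed.
Lemma p4_pos x : 0 < x -> 0 < p4 x.
Proof. intros; unfold p4; apply sqrt_lt_R0, sqrt_lt_R0; auto. Qed.
Lemma p4_sq x : 0 <= x -> p4 x ^ 2 = sqrt x.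
Proof. intros; unfold p4; apply pow2_sqrt, sqrt_pos. Qed.
Lemma p4_pow4 x : 0 <= x -> p4 x ^ 4 = x.
Proof. intros H. replace 4%nat with (2*2)%nat by reflexivity. rewrite pow_mult, p4_sq by auto. apply pow2_sqrt; auto. Qed.
Lemma p4_le x y : 0 <= x <= y -> p4 x <= p4 y.
Proof. intros; unfold p4; apply sqrt_le_1_alt, sqrt_le_1_alt; lra. Qed.
Lemma p4_lt x y : 0 <= x < y -> p4 x < p4 y.
Proof. intros; unfold p4; apply sqrt_lt_1_alt; split. apply sqrt_pos. apply sqrt_lt_1_alt; lra. Qed.
Lemma p4_mult x y : 0 <= x -> 0 <= y -> p4 (x*y) = p4 x * p4 y.
Proof. intros; unfold p4. rewrite sqrt_mult by auto. apply sqrt_mult; apply sqrt_pos. Qed.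
Lemma p4_0 : p4 0 = 0.
Proof. unfold p4; rewrite sqrt_0; apply sqrt_0. Qed.

Lemma t_pos m : (1 <= m)%nat -> 0 < t m.
Proof. intros; apply p4_pos. apply lt_0_INR; lia. Qed.
Lemma t_nonneg m : 0 <= t m.
Proof. apply p4_nonneg. Qed.
Lemma t_pow4 m : t m ^ 4 = INR m.
Proof. apply p4_pow4, pos_INR. Qed.
Lemma t_le m n : (m <= n)%nat -> t m <= t n.
Proof. intros; apply p4_le. split. apply pos_INR. apply le_INR; auto. Qed.
Lemma t_ge1 m : (1 <= m)%nat -> 1 <= t m.
Proof. intros. replace 1 with (p4 1). apply p4_le. split. lra. replace 1 with (INR 1) by reflexivity. apply le_INR; auto.
  unfold p4; rewrite !sqrt_1; reflexivity. Qed.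
Lemma t_0 : t 0 = 0.
Proof. unfold t; simpl; apply p4_0. Qed.

Lemma nonneg_frac a b : 0 <= a -> 0 < b -> 0 <= a / b.
Proof. intros; apply Rmult_le_pos; auto. left; apply Rinv_0_lt_compat; auto. Qed.

Lemma T1 c : (1 <= c)%nat -> / (t c ^ 3) <= 4 * (t c - t (c - 1)).
Proof. intros Hc. set (a := t c). set (b := t (c-1)).
  assert (Ha : 0 < a) by (apply t_pos; auto). assert (Hb : 0 <= b) by apply t_nonneg.
  assert (Hab : b <= a) by (apply t_le; lia).
  assert (E : a^4 - b^4 = 1). { unfold a, b; rewrite !t_pow4. rewrite minus_INR by lia. simpl; lra. }
  clearbody a b.
  assert (E2 : 4*(a-b) - (a^4-b^4)/a^3 = (4*a^3*(a-b) - (a^4-b^4)) / a^3) by (field; lra).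
  rewrite E in E2. unfold Rdiv in E2. rewrite Rmult_1_l in E2.
  cut (0 <= (4*a^3*(a-b) - 1) * / a^3). lra.
  apply nonneg_frac; [|apply pow_lt; auto]. rewrite <- E.
  assert (4*a^3*(a-b) - (a^4-b^4) = (a-b)*((a^3-a^2*b)+(a^3-a*b^2)+(a^3-b^3))) by ring.
  rewrite H. apply Rmult_le_pos. lra.
  assert (b^2 <= a^2) by (apply pow_incr; lra). assert (b^3 <= a^3) by (apply pow_incr; lra).
  assert (a^2*b <= a^2 * a) by (apply Rmult_le_compat_l; nra). assert (a*b^2 <= a*a^2) by (apply Rmult_le_compat_l; lra).
  nra.
Qed.

Lemma T2 c : (1 <= c)%nat -> / (t c ^ 7) <= 4 * (/ (t c ^ 3) - / (t (S c) ^ 3)).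
Proof. intros Hc. set (a := t c). set (b := t (S c)).
  assert (Ha : 1 <= a) by (apply t_ge1; auto). assert (Hab : a <= b) by (apply t_le; lia).
  assert (E : b^4 = a^4 + 1). { unfold a, b; rewrite !t_pow4. rewrite S_INR. lra. }
  clearbody a b.
  assert (E2 : 4*(/a^3 - /b^3) - /a^7 = (4*a^4*b^3*(b^3-a^3) - b^6) / (a^7*b^6)) by (field; split; lra).
  assert (0 <= (4*a^4*b^3*(b^3-a^3) - b^6) / (a^7*b^6)); [|lra].
  apply nonneg_frac; [|apply Rmult_lt_0_compat; apply pow_lt; lra].
  assert (X : 1 <= 4*b^3*(b-a)).
  { assert (b^4 - a^4 = (b-a)*(b^3+b^2*a+b*a^2+a^3)) by ring.
    assert (a^3 <= b^3) by (apply pow_incr; lra). assert (a^2 <= b^2) by (apply pow_incr; lra).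
    assert (b^2*a <= b^2*b) by (apply Rmult_le_compat_l; nra). assert (b*a^2 <= b*b^2) by (apply Rmult_le_compat_l; lra).
    assert ((b-a)*(b^3+b^2*a+b*a^2+a^3) <= (b-a)*(4*b^3)) by (apply Rmult_le_compat_l; lra). nra. }
  assert (Y : 3*a^2*(b-a) <= b^3 - a^3).
  { assert (b^3-a^3 = (b-a)*(b^2+a*b+a^2)) by ring. rewrite H.
    rewrite (Rmult_comm (3*a^2)). apply Rmult_le_compat_l. lra. nra. }
  assert (Z : b^6 <= 3*a^6).
  { assert (b^4 <= 2*a^4) by (assert (1 <= a^4) by (apply pow_R1_Rle; lra); lra).
    assert ((b^6)^2 <= (3*a^6)^2).
    { replace ((b^6)^2) with ((b^4)^3) by ring. replace ((3*a^6)^2) with (9*(a^4)^3) by ring.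
      assert ((b^4)^3 <= (2*a^4)^3) by (apply pow_incr; split; [apply pow_le; lra| lra]). 
      assert (0 <= (a^4)^3) by (apply pow_le; apply pow_le; lra). nra. }
    assert (0 <= 3*a^6) by (assert (0 <= a^6) by (apply pow_le; lra); lra).
    assert (0 <= b^6) by (apply pow_le; lra). nra. }
  assert (P : 0 <= a^4*b^3) by (apply Rmult_le_pos; apply pow_le; lra).
  assert (4*a^4*b^3*(b^3-a^3) >= 4*a^4*b^3*(3*a^2*(b-a))) by nra.
  assert (4*a^4*b^3*(3*a^2*(b-a)) = 3*a^6 * (4*b^3*(b-a))) by ring.
  assert (0 <= a^6) by (apply pow_le; lra).
  nra.
Qed.

Lemma T3 q : (1 <= q)%nat -> / (t q ^ 6) <= 6 * (/ (t q ^ 2) - / (t (S q) ^ 2)).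
Proof. intros Hq. set (a := t q ^ 2). set (b := t (S q) ^ 2).
  assert (Ha : 1 <= a) by (unfold a; assert (1 <= t q) by (apply t_ge1; auto); nra).
  assert (Hab : a <= b) by (unfold a, b; apply pow_incr; split; [apply t_nonneg| apply t_le; lia]).
  assert (E : b^2 = a^2 + 1). { unfold a, b. replace ((t (S q)^2)^2) with (t (S q)^4) by ring. replace ((t q^2)^2) with (t q^4) by ring. rewrite !t_pow4. rewrite S_INR. lra. }
  replace (t q ^ 6) with (a^3) by (unfold a; ring).
  clearbody a b.
  assert (E2 : 6*(/a - /b) - /a^3 = (6*a^2*(b-a) - b) / (a^3*b)) by (field; split; lra).
  assert (0 <= (6*a^2*(b-a) - b) / (a^3*b)); [|lra].
  apply nonneg_frac; [|apply Rmult_lt_0_compat; [apply pow_lt|]; lra].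
  assert (b <= 2*a) by nra.
  assert ((b-a)*(b+a) = 1) by nra.
  assert (6*a^2 >= b*(a+b)) by nra.
  nra.
Qed.

Lemma inv_le a b : 0 < a -> a <= b -> / b <= / a.
Proof. intros; apply Rinv_le_contravar; auto. Qed.

Lemma P1 (y x tm : R) : 0 < y -> 0 < tm ->
  Rmin (/ (tm^2 * y)) (/ tm^6) <= / (p4 y ^ 3 * tm ^ 3).
Proof. intros Hy Ht. set (s := p4 y). assert (Hs : 0 < s) by (apply p4_pos; auto).
  assert (Ey : y = s^4) by (unfold s; rewrite p4_pow4; lra). rewrite Ey.
  destruct (Rle_dec tm s).
  - eapply Rle_trans; [apply Rmin_l|]. apply inv_le. apply Rmult_lt_0_compat; apply pow_lt; auto.
    replace (tm^2*s^4) with ((s^3*tm^2)*s) by ring. replace (s^3*tm^3) with ((s^3*tm^2)*tm) by ring.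
    apply Rmult_le_compat_l; auto. apply Rmult_le_pos; apply pow_le; lra.
  - eapply Rle_trans; [apply Rmin_r|]. apply inv_le. apply Rmult_lt_0_compat; apply pow_lt; auto.
    replace (tm^6) with (tm^3*tm^3) by ring. apply Rmult_le_compat_r. apply pow_le; lra. apply pow_incr; lra.
Qed.

Lemma Qlem x w : 0 <= x -> 0 <= w -> w^4 <= 2*x^4 -> w^3 <= 2*x^3.
Proof. intros Hx Hw H. destruct (Rle_dec w x).
  - assert (w^3 <= x^3) by (apply pow_incr; lra). assert (0 <= x^3) by (apply pow_le; lra). lra.
  - assert (0 < w) by lra. assert (w * w^3 <= w * (2*x^3)); [|nra].
    assert (x * (2*x^3) <= w*(2*x^3)) by (apply Rmult_le_compat_r; [assert (0 <= x^3) by (apply pow_le; lra); lra|lra]).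
    nra.
Qed.

Lemma P2 c d : (1 <= c)%nat -> (1 <= d)%nat ->
  / (t c ^ 3 * t d ^ 3) <= 2 / t (c+d) ^ 3 * (/ t c ^ 3 + / t d ^ 3).
Proof. intros Hc Hd.
  assert (Pc : 0 < t c ^3) by (apply pow_lt, t_pos; auto). assert (Pd : 0 < t d ^3) by (apply pow_lt, t_pos; auto).
  assert (PN : 0 < t (c+d) ^3) by (apply pow_lt, t_pos; lia).
  assert (gen : forall c d, (1 <= c)%nat -> (1 <= d)%nat -> (c <= d)%nat ->
     / (t c ^ 3 * t d ^ 3) <= 2 / t (c+d) ^ 3 * (/ t c ^ 3)).
  { clear. intros c d Hc Hd Hcd.
    assert (Pc : 0 < t c ^3) by (apply pow_lt, t_pos; auto). assert (Pd : 0 < t d ^3) by (apply pow_lt, t_pos; auto).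
    assert (PN : 0 < t (c+d) ^3) by (apply pow_lt, t_pos; lia).
    assert (t (c+d)^3 <= 2 * t d ^3).
    { apply Qlem. apply t_nonneg. apply t_nonneg. rewrite !t_pow4. rewrite plus_INR. apply le_INR in Hcd. lra. }
    rewrite Rinv_mult. rewrite (Rmult_comm (2 / _)).
    apply Rmult_le_compat_l. left; apply Rinv_0_lt_compat; auto.
    assert (t (c+d) <> 0) by (apply Rgt_not_eq, t_pos; lia).
    replace (2 / t (c+d)^3) with (/ (t (c+d)^3 / 2)) by (field; auto).
    apply inv_le. lra. lra. }
  assert (0 <= 2 / t (c+d)^3 * / t c^3) by (apply Rmult_le_pos; [apply nonneg_frac; lra| left; apply Rinv_0_lt_compat; auto]).
  assert (0 <= 2 / t (c+d)^3 * / t d^3) by (apply Rmult_le_pos; [apply nonneg_frac; lra| left; apply Rinv_0_lt_compat; auto]).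
  destruct (le_lt_dec c d).
  - pose proof (gen c d Hc Hd l). lra.
  - pose proof (gen d c Hd Hc ltac:(lia)). rewrite Rmult_comm in H1. rewrite Nat.add_comm in H1. lra.
Qed.

Lemma P3 a b : t a * t b <= t (a+b) ^ 2.
Proof. unfold t. rewrite <- p4_mult by apply pos_INR. rewrite p4_sq by apply pos_INR.
  unfold p4. apply sqrt_le_1_alt. rewrite plus_INR.
  pose proof (pos_INR a); pose proof (pos_INR b).
  assert (sqrt (INR a * INR b) <= sqrt ((INR a + INR b)^2)). apply sqrt_le_1_alt. nra.
  rewrite sqrt_pow2 in H1 by lra. lra.
Qed.
Open Scope R_scope.

Ltac nz := repeat split; try (apply Rgt_not_eq; lra); try (apply Rlt_not_eq; lra).

Definition f (y : R) (m : nat) : R := Rmin (/ (t m ^ 2 * y)) (/ t m ^ 6).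

Lemma f_nonneg y m : 0 < y -> (1 <= m)%nat -> 0 <= f y m.
Proof. intros. pose proof (t_pos m H0). unfold f. apply Rmin_glb; left; apply Rinv_0_lt_compat.
  apply Rmult_lt_0_compat; [apply pow_lt|]; auto. apply pow_lt; auto. Qed.

Lemma part1 M N (g : nat -> R) : (forall c, 0 <= g c) ->
  sumR M (fun c => sumR M (fun d => if Nat.eqb (c+d) N then g c else 0)) <=
  sumR M (fun c => if Nat.ltb c N then g c else 0).
Proof. intros Hg. apply sumR_le. intros c Hc. destruct (Nat.ltb c N) eqn:E.
  - apply Nat.ltb_lt in E. rewrite (sumR_ext M _ (fun d => if Nat.eqb d (N - c) then g c else 0)).
    apply sum_single; auto. intros d Hd. destruct (Nat.eqb (c+d) N) eqn:E1; destruct (Nat.eqb d (N-c)) eqn:E2; auto.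
    apply Nat.eqb_eq in E1; apply Nat.eqb_neq in E2; lia. apply Nat.eqb_neq in E1; apply Nat.eqb_eq in E2; lia.
  - apply Nat.ltb_ge in E. rewrite (sumR_ext M _ (fun _ => 0)). rewrite sumR_zero; lra.
    intros d Hd. destruct (Nat.eqb (c+d) N) eqn:E1; auto. apply Nat.eqb_eq in E1; lia.
Qed.

Lemma sum_lt_t3 M N : (1 <= N)%nat -> sumR M (fun c => if Nat.ltb c N then / t c ^ 3 else 0) <= 4 * t N.
Proof. intros HN. apply (sum_dc M (fun c => Nat.ltb c N) (fun c => / t c ^ 3) (fun c => 4 * t c)).
  - intros n H. apply Nat.ltb_lt in H; apply Nat.ltb_lt; lia.
  - intros c Hc. pose proof (T1 c Hc). lra.
  - rewrite t_0; lra.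
  - intros n H. apply Nat.ltb_lt in H. pose proof (t_le n N ltac:(lia)). lra.
  - pose proof (t_nonneg N); lra.
Qed.

Lemma J M N : (1 <= N)%nat ->
  sumR M (fun c => sumR M (fun d => if Nat.eqb (c+d) N then / (t c^3 * t d^3) else 0)) <= 16 / t N ^ 2.
Proof. intros HN. set (K := 2 / t N ^ 3).
  assert (PN : 0 < t N) by (apply t_pos; auto).
  assert (HK : 0 <= K) by (unfold K; apply nonneg_frac; [lra|apply pow_lt; auto]).
  assert (inv3 : forall c, 0 <= / t c ^ 3). { intros. destruct (Nat.eq_dec c 0). subst; rewrite t_0. simpl. rewrite Rmult_0_l, Rinv_0; lra.
    left; apply Rinv_0_lt_compat, pow_lt, t_pos; lia. }
  apply Rle_trans with (sumR M (fun c => sumR M (fun d => (if Nat.eqb (c+d) N then K * / t c ^3 else 0) + (if Nat.eqb (c+d) N then K * / t d ^3 else 0)))).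
  { apply sumR_le; intros c Hc. apply sumR_le; intros d Hd. destruct (Nat.eqb (c+d) N) eqn:E; [|lra]. apply Nat.eqb_eq in E. 
    pose proof (P2 c d ltac:(lia) ltac:(lia)). rewrite E in H. unfold K. lra. }
  rewrite (sumR_ext M _ (fun c => sumR M (fun d => if Nat.eqb (c+d) N then K * / t c ^3 else 0) + sumR M (fun d => if Nat.eqb (c+d) N then K * / t d ^3 else 0))) by (intros; apply sumR_plus).
  rewrite sumR_plus.
  assert (A : sumR M (fun c => sumR M (fun d => if Nat.eqb (c+d) N then K * / t c ^3 else 0)) <= K * (4 * t N)).
  { eapply Rle_trans. apply part1. intros; apply Rmult_le_pos; auto.
    rewrite (sumR_ext M _ (fun c => K * (if Nat.ltb c N then / t c ^ 3 else 0))) by (intros; destruct (Nat.ltb i N); lra).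
    rewrite sumR_scal. apply Rmult_le_compat_l; auto. apply sum_lt_t3; auto. }
  assert (B : sumR M (fun c => sumR M (fun d => if Nat.eqb (c+d) N then K * / t d ^3 else 0)) <= K * (4 * t N)).
  { rewrite sumR_swap. rewrite (sumR_ext M _ (fun c => sumR M (fun d => if Nat.eqb (c+d) N then K * / t c ^3 else 0))).
    exact A. intros c _. apply sumR_ext. intros d _. rewrite Nat.add_comm. reflexivity. }
  assert (K * (4 * t N) + K * (4 * t N) = 16 / t N ^2) by (unfold K; field; nz). lra.
Qed.

Lemma Qbound M y : 0 < y -> sumR M (fun a => f y a * / t a) <= 8 / p4 y ^ 3.
Proof. intros Hy. set (s := p4 y). assert (Hs : 0 < s) by (apply p4_pos; auto).
  assert (Ey : y = s^4) by (unfold s; rewrite p4_pow4; lra).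
  set (p := fun a => if Rle_dec (INR a) y then true else false).
  apply Rle_trans with (sumR M (fun a => (if p a then / y * / t a ^ 3 else 0) + (if negb (p a) then / t a ^ 7 else 0))).
  { apply sumR_le. intros a Ha. pose proof (t_pos a ltac:(lia)) as Pa. unfold p, f. destruct (Rle_dec (INR a) y) as [L|L]; simpl.
    - eapply Rle_trans. apply Rmult_le_compat_r. left; apply Rinv_0_lt_compat; auto. apply Rmin_l.
      right. field; nz.
    - eapply Rle_trans. apply Rmult_le_compat_r. left; apply Rinv_0_lt_compat; auto. apply Rmin_r.
      right. field; nz. }
  rewrite sumR_plus.
  assert (A : sumR M (fun a => if p a then / y * / t a ^ 3 else 0) <= / y * (4 * s)).
  { apply (sum_dc M p (fun a => / y * / t a ^ 3) (fun c => / y * (4 * t c))).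
    - intros n. unfold p. destruct (Rle_dec (INR (S n)) y); destruct (Rle_dec (INR n) y); auto.
      rewrite S_INR in r. lra.
    - intros c Hc. pose proof (T1 c Hc). assert (0 < / y) by (apply Rinv_0_lt_compat; auto). nra.
    - rewrite t_0; lra.
    - intros n. unfold p. destruct (Rle_dec (INR n) y); [|discriminate]. intros _.
      assert (t n <= s) by (apply p4_le; split; [apply pos_INR|auto]). assert (0 < / y) by (apply Rinv_0_lt_compat; auto). nra.
    - assert (0 < / y) by (apply Rinv_0_lt_compat; auto). nra. }
  assert (B : sumR M (fun a => if negb (p a) then / t a ^ 7 else 0) <= 4 / s ^ 3).
  { apply (sum_uc M (fun a => negb (p a)) (fun a => / t a ^ 7) (fun c => 4 * / t c ^ 3)).
    - intros n. unfold p. destruct (Rle_dec (INR (S n)) y); destruct (Rle_dec (INR n) y); auto.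
      rewrite S_INR in r. lra.
    - intros c Hc. pose proof (T2 c Hc). lra.
    - intros n Hn. pose proof (t_pos n Hn). assert (0 < / t n ^3) by (apply Rinv_0_lt_compat, pow_lt; auto). lra.
    - intros n Hn. unfold p. destruct (Rle_dec (INR n) y); [discriminate|]. intros _.
      assert (s < t n) by (apply p4_lt; lra). unfold Rdiv. apply Rmult_le_compat_l. lra.
      apply inv_le. apply pow_lt; auto. apply pow_incr; lra.
    - apply nonneg_frac. lra. apply pow_lt; auto. }
  assert (/ y * (4 * s) + 4 / s^3 = 8 / s^3) by (rewrite Ey; field; nz). lra.
Qed.

Definition S4 M y := sumR M (fun a => sumR M (fun b => sumR M (fun c => sumR M (fun d =>
  if Nat.eqb (a+b) (c+d) then f y a * f y b * f y c * f y d else 0)))).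

Lemma core M y : 0 < y -> S4 M y <= 1024 / y ^ 3.
Proof. intros Hy. set (s := p4 y). assert (Hs : 0 < s) by (apply p4_pos; auto).
  assert (Ey : y = s^4) by (unfold s; rewrite p4_pow4; lra).
  assert (fb : forall m, (1 <= m)%nat -> f y m <= / (s^3 * t m ^3)).
  { intros m Hm. apply P1; auto. apply t_pos; auto. }
  unfold S4. apply Rle_trans with (sumR M (fun a => sumR M (fun b => 16 / s ^ 6 * ((f y a * / t a) * (f y b * / t b))))).
  { apply sumR_le; intros a Ha; apply sumR_le; intros b Hb.
    rewrite (sumR_ext M _ (fun c => f y a * f y b * sumR M (fun d => if Nat.eqb (c+d) (a+b) then f y c * f y d else 0))).
    2:{ intros c _. rewrite <- sumR_scal. apply sumR_ext. intros d _. rewrite (Nat.eqb_sym (a+b)).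
        destruct (Nat.eqb (c+d) (a+b)); ring. }
    rewrite sumR_scal.
    assert (I : sumR M (fun c => sumR M (fun d => if Nat.eqb (c+d) (a+b) then f y c * f y d else 0)) <= / s^6 * (16 / t (a+b) ^2)).
    { eapply Rle_trans; [|apply Rmult_le_compat_l; [left; apply Rinv_0_lt_compat, pow_lt; auto| apply (J M (a+b)); lia]].
      rewrite <- sumR_scal. apply sumR_le; intros c Hc. rewrite <- sumR_scal. apply sumR_le; intros d Hd.
      destruct (Nat.eqb (c+d) (a+b)); [|lra].
      pose proof (fb c ltac:(lia)); pose proof (fb d ltac:(lia)).
      pose proof (f_nonneg y c Hy ltac:(lia)); pose proof (f_nonneg y d Hy ltac:(lia)).
      eapply Rle_trans. apply Rmult_le_compat; eauto.
      right. pose proof (t_pos c ltac:(lia)); pose proof (t_pos d ltac:(lia)). field; nz. }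
    pose proof (f_nonneg y a Hy ltac:(lia)); pose proof (f_nonneg y b Hy ltac:(lia)).
    pose proof (t_pos a ltac:(lia)); pose proof (t_pos b ltac:(lia)).
    eapply Rle_trans. apply Rmult_le_compat_l. apply Rmult_le_pos; auto. exact I.
    assert (/ t (a+b) ^2 <= / (t a * t b)) by (apply inv_le; [apply Rmult_lt_0_compat; auto| apply P3]).
    assert (0 <= f y a * f y b * / s^6) by (apply Rmult_le_pos; [apply Rmult_le_pos; auto| left; apply Rinv_0_lt_compat, pow_lt; auto]).
    replace (f y a * f y b * (/ s ^ 6 * (16 / t (a + b) ^ 2))) with (16 * (f y a * f y b * / s^6) * / t (a+b)^2) by (pose proof (t_pos (a+b) ltac:(lia)); field; nz).
    replace (16 / s ^ 6 * (f y a * / t a * (f y b * / t b))) with (16 * (f y a * f y b * / s^6) * / (t a * t b)) by (field; nz).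
    apply Rmult_le_compat_l; auto. lra. }
  rewrite (sumR_ext M _ (fun a => 16 / s^6 * sumR M (fun b => (f y a * / t a) * (f y b * / t b)))) by (intros; apply sumR_scal).
  rewrite sumR_scal. rewrite sumR_prod.
  pose proof (Qbound M y Hy). fold s in H.
  assert (0 <= sumR M (fun a => f y a * / t a)).
  { apply sumR_nonneg; intros. apply Rmult_le_pos. apply f_nonneg; auto; lia. left; apply Rinv_0_lt_compat, t_pos; lia. }
  assert (sumR M (fun a => f y a * / t a) * sumR M (fun a => f y a * / t a) <= (8 / s^3) * (8/s^3)) by (apply Rmult_le_compat; auto).
  assert (1024 / y^3 = 16 / s^6 * ((8 / s^3) * (8/s^3))) by (rewrite Ey; field; nz).
  rewrite H2. apply Rmult_le_compat_l. apply nonneg_frac. lra. apply pow_lt; auto. auto.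
Qed.
Open Scope nat_scope.

Definition sqfree (q : nat) := forall d, Nat.divide (d*d) q -> d = 1.

Lemma coprime_split (p r : nat) : r <> 0 -> exists g p' r', g <> 0 /\ p = p' * g /\ r = r' * g /\ Nat.gcd p' r' = 1.
Proof. intros Hr. set (g := Nat.gcd p r).
  assert (Hg : g <> 0) by (unfold g; intro E; apply Nat.gcd_eq_0 in E; lia).
  destruct (Nat.gcd_divide_l p r) as [p' Ep]. destruct (Nat.gcd_divide_r p r) as [r' Er]. fold g in Ep, Er.
  exists g, p', r'. repeat split; auto.
  assert (g = Nat.gcd p' r' * g). { unfold g at 1. rewrite Ep, Er at 1. rewrite Nat.gcd_mul_mono_r. fold g. reflexivity. }
  destruct (Nat.gcd p' r') as [|[|k]]; nia.
Qed.

Lemma R_nat x r p : r <> 0 -> x * (r*r) = p*p -> exists k, x = k*k.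
Proof. intros Hr E. destruct (coprime_split p r Hr) as [g [p' [r' [Hg [Ep [Er Hc]]]]]]. subst p r.
  assert (E2 : x * (r'*r') = p'*p').
  { apply (Nat.mul_cancel_l _ _ (g*g)). nia. nia. }
  assert (D : Nat.divide r' (p' * p')) by (exists (x*r'); nia).
  assert (D2 : Nat.divide r' p'). { apply (Nat.gauss r' p' p'); auto. rewrite Nat.gcd_comm; auto. }
  assert (r' = 1). { apply Nat.divide_1_r. rewrite <- Hc. apply Nat.gcd_greatest; auto. apply Nat.divide_refl. }
  subst r'. exists p'. lia.
Qed.

Lemma sqfree_nz q : sqfree q -> q <> 0.
Proof. intros H E. subst. assert (2 = 1) by (apply H; exists 0; lia). lia. Qed.

Lemma SQ1 q s : sqfree q -> Nat.divide q (s*s) -> Nat.divide q s.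
Proof. intros Hq [k Ek]. pose proof (sqfree_nz q Hq) as Hq0.
  destruct (coprime_split s q Hq0) as [g [s' [q' [Hg [Es [Eq Hc]]]]]].
  assert (E2 : s'*s'*g = k*q'). { apply (Nat.mul_cancel_l _ _ g); auto. subst; nia. }
  assert (D1 : Nat.divide q' (s' * (s'*g))) by (exists k; lia).
  assert (D2 : Nat.divide q' (s'*g)) by (apply (Nat.gauss q' s'); auto; rewrite Nat.gcd_comm; auto).
  assert (D3 : Nat.divide q' g) by (apply (Nat.gauss q' s'); auto; rewrite Nat.gcd_comm; auto).
  assert (q' = 1). { apply Hq. destruct D3 as [w Ew]. exists w. subst q. rewrite Ew. lia. }
  subst. exists s'. lia.
Qed.

Lemma main_sq q m n s : sqfree q -> m <> 0 -> q*(m*m)*n = s*s -> exists b, n = q*(b*b).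
Proof. intros Hq Hm E. pose proof (sqfree_nz q Hq) as Hq0.
  assert (D : Nat.divide q s) by (apply SQ1; auto; exists (m*m*n); lia).
  destruct D as [u Eu]. subst s.
  assert (E2 : m*m*n = q*(u*u)) by (apply (Nat.mul_cancel_l _ _ q); auto; nia).
  assert (E3 : (q*n)*(m*m) = (q*u)*(q*u)) by nia.
  destruct (R_nat (q*n) m (q*u) Hm E3) as [k Ek].
  assert (D : Nat.divide q k) by (apply SQ1; auto; exists n; lia).
  destruct D as [b Eb]. subst k. exists b. apply (Nat.mul_cancel_l _ _ q); auto. nia.
Qed.

Lemma decomp n : n <> 0 -> exists q m, sqfree q /\ m <> 0 /\ n = q*(m*m).
Proof. induction n as [n IH] using lt_wf_ind. intros Hn.
  destruct (classic (exists d, 2 <= d /\ Nat.divide (d*d) n)) as [[d [Hd [k Ek]]]|N].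
  - assert (k <> 0) by (intro; subst; lia). assert (4 <= d*d) by nia. assert (k*4 <= k*(d*d)) by (apply Nat.mul_le_mono_l; auto). assert (k < n) by lia.
    destruct (IH k H2 H) as [q [m [Hq [Hm Ekq]]]]. exists q, (d*m). repeat split; auto. nia. nia.
  - exists n, 1. repeat split; try lia. intros d Hd.
    destruct d as [|[|d]]. destruct Hd as [w Ew]; lia. reflexivity. exfalso; apply N. exists (S (S d)). split; auto; lia.
Qed.

Open Scope R_scope.

Lemma sqrt_nat_inj a b : sqrt (INR a) = sqrt (INR b) -> a = b.
Proof. intros E. apply INR_eq. rewrite <- (sqrt_sqrt (INR a)), <- (sqrt_sqrt (INR b)) by apply pos_INR. rewrite E; auto. Qed.

Lemma sqrt_prod_inj a b c d : sqrt (INR a) * sqrt (INR b) = sqrt (INR c) * sqrt (INR d) -> (a*b = c*d)%nat.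
Proof. intros E. apply INR_eq. rewrite !mult_INR.
  rewrite <- (sqrt_sqrt (INR a)), <- (sqrt_sqrt (INR b)), <- (sqrt_sqrt (INR c)), <- (sqrt_sqrt (INR d)) by apply pos_INR.
  replace (sqrt (INR a) * sqrt (INR a) * (sqrt (INR b) * sqrt (INR b))) with ((sqrt (INR a) * sqrt (INR b))^2) by ring.
  rewrite E. ring. Qed.

Lemma sum_prod_eq (X Y U V : nat) : (X+Y = U+V)%nat -> (X*Y = U*V)%nat -> X = U \/ X = V.
Proof. intros E1 E2. assert (((Z.of_nat X - Z.of_nat U) * (Z.of_nat X - Z.of_nat V) = 0)%Z) by nia.
  apply Z.mul_eq_0 in H. lia. Qed.

Lemma G (A B C D : nat) (e : Z) : e <> 0%Z ->
  2 * (sqrt (INR A) * sqrt (INR B) - sqrt (INR C) * sqrt (INR D)) = IZR e -> exists k, (A*B = k*k)%nat.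
Proof. intros He E.
  set (x := sqrt (INR A) * sqrt (INR B)). set (w := sqrt (INR C) * sqrt (INR D)).
  assert (Hx2 : x*x = INR A * INR B).
  { unfold x. rewrite <- (sqrt_sqrt (INR A)) at 3 by apply pos_INR. rewrite <- (sqrt_sqrt (INR B)) at 3 by apply pos_INR. ring. }
  assert (Hw2 : w*w = INR C * INR D).
  { unfold w. rewrite <- (sqrt_sqrt (INR C)) at 3 by apply pos_INR. rewrite <- (sqrt_sqrt (INR D)) at 3 by apply pos_INR. ring. }
  assert (Hx0 : 0 <= x) by (apply Rmult_le_pos; apply sqrt_pos).
  fold x w in E. clearbody x w.
  assert (Ew : w = x - IZR e / 2) by lra.
  set (P := (4 * (Z.of_nat A * Z.of_nat B) - 4 * (Z.of_nat C * Z.of_nat D) + e*e)%Z).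
  assert (EP : x * IZR (4*e) = IZR P).
  { unfold P. rewrite !plus_IZR, !minus_IZR, !mult_IZR. rewrite <- !INR_IZR_INZ.
    rewrite <- Hx2, <- Hw2, Ew. simpl. field. }
  assert (EA : x * IZR (Z.abs (4*e)) = IZR (Z.abs P)).
  { rewrite <- !Rabs_Zabs. rewrite <- EP. rewrite Rabs_mult. rewrite (Rabs_right x) by lra. reflexivity. }
  rewrite <- !Zabs2Nat.id_abs in EA. rewrite <- !INR_IZR_INZ in EA.
  apply (R_nat (A*B) (Z.abs_nat (4*e)) (Z.abs_nat P)). lia.
  apply INR_eq. rewrite !mult_INR. rewrite <- EA. rewrite <- Hx2. ring.
Qed.

Lemma structure (n1 n2 n3 n4 : nat) : (1 <= n1)%nat -> (1 <= n2)%nat -> (1 <= n3)%nat -> (1 <= n4)%nat ->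
  sqrt (INR n1) + sqrt (INR n2) = sqrt (INR n3) + sqrt (INR n4) -> n1 <> n3 -> n1 <> n4 ->
  exists q m1 m2 m3 m4, (1 <= q)%nat /\ (1 <= m1)%nat /\ (1 <= m2)%nat /\ (1 <= m3)%nat /\ (1 <= m4)%nat /\
    n1 = (q*(m1*m1))%nat /\ n2 = (q*(m2*m2))%nat /\ n3 = (q*(m3*m3))%nat /\ n4 = (q*(m4*m4))%nat /\ (m1+m2 = m3+m4)%nat.
Proof. intros H1 H2 H3 H4 E N3 N4.
  set (a := sqrt (INR n1)) in *. set (b := sqrt (INR n2)) in *. set (c := sqrt (INR n3)) in *. set (d := sqrt (INR n4)) in *.
  assert (Sa : a*a = INR n1) by (apply sqrt_sqrt, pos_INR). assert (Sb : b*b = INR n2) by (apply sqrt_sqrt, pos_INR).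
  assert (Sc : c*c = INR n3) by (apply sqrt_sqrt, pos_INR). assert (Sd : d*d = INR n4) by (apply sqrt_sqrt, pos_INR).
  assert (Q12 : exists k, (n1*n2 = k*k)%nat).
  { set (e := (Z.of_nat n3 + Z.of_nat n4 - Z.of_nat n1 - Z.of_nat n2)%Z).
    assert (Ee : 2*(a*b - c*d) = IZR e).
    { unfold e. rewrite !minus_IZR, !plus_IZR, <- !INR_IZR_INZ. rewrite <- Sa, <- Sb, <- Sc, <- Sd.
      replace c with (a + b - d) by lra. ring. }
    destruct (Z.eq_dec e 0) as [Z0|Z0].
    - exfalso. rewrite Z0 in Ee. assert (a*b = c*d) by (simpl in Ee; lra).
      assert (n1*n2 = n3*n4)%nat by (apply sqrt_prod_inj; auto).
      unfold e in Z0. destruct (sum_prod_eq n1 n2 n3 n4 ltac:(lia) H0); auto.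
    - apply (G n1 n2 n3 n4 e); auto. }
  assert (Q13 : exists k, (n1*n3 = k*k)%nat).
  { set (e := (Z.of_nat n1 + Z.of_nat n3 - Z.of_nat n2 - Z.of_nat n4)%Z).
    assert (Ee : 2*(a*c - b*d) = IZR e).
    { unfold e. rewrite !minus_IZR, !plus_IZR, <- !INR_IZR_INZ. rewrite <- Sa, <- Sb, <- Sc, <- Sd.
      replace a with (c + d - b) by lra. ring. }
    destruct (Z.eq_dec e 0) as [Z0|Z0].
    - exfalso. rewrite Z0 in Ee. assert (a*c = b*d) by (simpl in Ee; lra).
      assert (n1*n3 = n2*n4)%nat by (apply sqrt_prod_inj; auto).
      unfold e in Z0. destruct (sum_prod_eq n1 n3 n2 n4 ltac:(lia) H0); auto.
      assert (n3 = n4) by lia. assert (a = b) by (unfold a, b; rewrite H5; reflexivity).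
      assert (c = d) by (unfold c, d; rewrite H6; reflexivity). apply N3. apply sqrt_nat_inj. fold a c. lra.
    - apply (G n1 n3 n2 n4 e); auto. }
  assert (Q14 : exists k, (n1*n4 = k*k)%nat).
  { set (e := (Z.of_nat n1 + Z.of_nat n4 - Z.of_nat n2 - Z.of_nat n3)%Z).
    assert (Ee : 2*(a*d - b*c) = IZR e).
    { unfold e. rewrite !minus_IZR, !plus_IZR, <- !INR_IZR_INZ. rewrite <- Sa, <- Sb, <- Sc, <- Sd.
      replace a with (c + d - b) by lra. ring. }
    destruct (Z.eq_dec e 0) as [Z0|Z0].
    - exfalso. rewrite Z0 in Ee. assert (a*d = b*c) by (simpl in Ee; lra).
      assert (n1*n4 = n2*n3)%nat by (apply sqrt_prod_inj; auto).
      unfold e in Z0. destruct (sum_prod_eq n1 n4 n2 n3 ltac:(lia) H0); auto.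
      assert (n3 = n4) by lia. assert (a = b) by (unfold a, b; rewrite H5; reflexivity).
      assert (c = d) by (unfold c, d; rewrite H6; reflexivity). apply N3. apply sqrt_nat_inj. fold a c. lra.
    - apply (G n1 n4 n2 n3 e); auto. }
  destruct (decomp n1 ltac:(lia)) as [q [m1 [Hq [Hm1 Eq1]]]].
  destruct Q12 as [k2 E2]. destruct Q13 as [k3 E3]. destruct Q14 as [k4 E4].
  rewrite Eq1 in E2, E3, E4.
  destruct (main_sq q m1 n2 k2 Hq Hm1 E2) as [m2 Em2].
  destruct (main_sq q m1 n3 k3 Hq Hm1 E3) as [m3 Em3].
  destruct (main_sq q m1 n4 k4 Hq Hm1 E4) as [m4 Em4].
  pose proof (sqfree_nz q Hq).
  exists q, m1, m2, m3, m4.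
  assert (m2 <> 0)%nat by (intro; subst; lia). assert (m3 <> 0)%nat by (intro; subst; lia). assert (m4 <> 0)%nat by (intro; subst; lia).
  repeat split; try lia.
  assert (sq : forall m, sqrt (INR (q*(m*m))) = INR m * sqrt (INR q)).
  { intros m. rewrite mult_INR, sqrt_mult by (try apply pos_INR; rewrite mult_INR; apply Rmult_le_pos; apply pos_INR).
    rewrite mult_INR, sqrt_square by apply pos_INR. ring. }
  unfold a, b, c, d in E. rewrite Eq1, Em2, Em3, Em4, !sq in E.
  assert (0 < sqrt (INR q)) by (apply sqrt_lt_R0, lt_0_INR; lia).
  apply INR_eq. rewrite !plus_INR. apply (Rmult_eq_reg_r (sqrt (INR q))). lra. lra.
Qed.
Open Scope R_scope.

Ltac nz2 := repeat split; try (apply Rgt_not_eq; lra); try (apply Rlt_not_eq; lra).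

Lemma Rmin_scal c a b : 0 < c -> c * Rmin a b = Rmin (c*a) (c*b).
Proof. intros Hc. unfold Rmin. destruct (Rle_dec a b); destruct (Rle_dec (c*a) (c*b)); auto; nra. Qed.

Lemma Rp34 x : 0 < x -> Rpower x (3/4) = p4 x ^ 3.
Proof. intros Hx. assert (E : p4 x = Rpower x (/4)).
  { unfold p4. rewrite <- (Rpower_sqrt x Hx).
    rewrite <- (Rpower_sqrt (Rpower x (/2))) by (unfold Rpower; apply exp_pos).
    rewrite Rpower_mult. f_equal. field. }
  rewrite E. rewrite <- Rpower_pow by (unfold Rpower; apply exp_pos). rewrite Rpower_mult. f_equal. simpl. field. Qed.

Definition w (z : R) (n : nat) : R := / Rpower (INR n) (3/4) * wt z n.

Lemma term_split z n1 n2 n3 n4 : (1 <= n1)%nat -> (1 <= n2)%nat -> (1 <= n3)%nat -> (1 <= n4)%nat ->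
  term z n1 n2 n3 n4 = w z n1 * w z n2 * w z n3 * w z n4.
Proof. intros. unfold term, w.
  assert (forall n, (1 <= n)%nat -> 0 < INR n) by (intros; apply lt_0_INR; lia).
  rewrite <- !Rpower_mult_distr; try (apply Rmult_lt_0_compat; auto); try (apply Rmult_lt_0_compat; auto); auto.
  assert (forall a b, 0 < Rpower a b) by (intros; unfold Rpower; apply exp_pos).
  assert (Rpower (INR n1) (3/4) <> 0) by (apply Rgt_not_eq; apply H4).
  assert (Rpower (INR n2) (3/4) <> 0) by (apply Rgt_not_eq; apply H4).
  assert (Rpower (INR n3) (3/4) <> 0) by (apply Rgt_not_eq; apply H4).
  assert (Rpower (INR n4) (3/4) <> 0) by (apply Rgt_not_eq; apply H4).
  field; auto.
Qed.

Lemma w_qm z q m : 0 < z -> (1 <= q)%nat -> (1 <= m)%nat ->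
  w z (q*(m*m)) = / t q ^ 3 * f (sqrt z / sqrt (INR q)) m.
Proof. intros Hz Hq Hm. unfold w, wt, f.
  assert (Pq : 0 < INR q) by (apply lt_0_INR; lia). assert (Pm : 0 < INR m) by (apply lt_0_INR; lia).
  assert (Psz : 0 < sqrt z) by (apply sqrt_lt_R0; auto). assert (Psq : 0 < sqrt (INR q)) by (apply sqrt_lt_R0; auto).
  rewrite Rp34 by (rewrite !mult_INR; apply Rmult_lt_0_compat; [|apply Rmult_lt_0_compat]; auto).
  rewrite !mult_INR. rewrite p4_mult, p4_mult by (try apply Rmult_le_pos; lra).
  fold (t q). fold (t m).
  rewrite sqrt_mult, sqrt_mult by (try apply Rmult_le_pos; lra). rewrite sqrt_sqrt by lra.
  pose proof (t_pos q Hq) as Tq. pose proof (t_pos m Hm) as Tm.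
  assert (Em : INR m = t m ^ 4) by (rewrite t_pow4; auto).
  replace (/ (t q * (t m * t m)) ^ 3) with (/ t q ^3 * / t m ^ 6) by (field; nz2).
  rewrite Rmult_assoc. f_equal.
  rewrite Rmin_scal by (apply Rinv_0_lt_compat, pow_lt; auto). f_equal.
  - rewrite Em. field. nz2.
  - ring.
Qed.

Lemma nested4_scal M K (F : nat -> nat -> nat -> nat -> R) :
  sumR M (fun a => sumR M (fun b => sumR M (fun c => sumR M (fun d => K * F a b c d)))) =
  K * sumR M (fun a => sumR M (fun b => sumR M (fun c => sumR M (fun d => F a b c d)))).
Proof. rewrite <- sumR_scal. apply sumR_ext; intros. rewrite <- sumR_scal. apply sumR_ext; intros.
  rewrite <- sumR_scal. apply sumR_ext; intros. rewrite <- sumR_scal. reflexivity. Qed.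

Definition Gq z q m1 m2 m3 m4 := if Nat.eqb (m1+m2) (m3+m4) then term z (q*(m1*m1)) (q*(m2*m2)) (q*(m3*m3)) (q*(m4*m4)) else 0.

Lemma per_q M z q : 0 < z -> (1 <= q)%nat ->
  sumR M (fun a => sumR M (fun b => sumR M (fun c => sumR M (fun d => Gq z q a b c d)))) <=
  1024 / (z * sqrt z) * / t q ^ 6.
Proof. intros Hz Hq. set (y := sqrt z / sqrt (INR q)).
  assert (Pq : 0 < INR q) by (apply lt_0_INR; lia).
  assert (Psz : 0 < sqrt z) by (apply sqrt_lt_R0; auto). assert (Psq : 0 < sqrt (INR q)) by (apply sqrt_lt_R0; auto).
  assert (Hy : 0 < y) by (unfold y; apply Rdiv_lt_0_compat; auto).
  rewrite (sumR_ext M _ (fun a => sumR M (fun b => sumR M (fun c => sumR M (fun d =>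
     / t q ^ 12 * (if Nat.eqb (a+b) (c+d) then f y a * f y b * f y c * f y d else 0)))))).
  2:{ intros a Ha. apply sumR_ext; intros b Hb. apply sumR_ext; intros c Hc. apply sumR_ext; intros d Hd.
      unfold Gq. destruct (Nat.eqb (a+b) (c+d)); [|ring].
      rewrite term_split by nia. rewrite !w_qm by (auto; lia). fold y.
      pose proof (t_pos q Hq). field. nz2. }
  rewrite nested4_scal. fold (S4 M y).
  pose proof (core M y Hy).
  assert (Tq : 0 < t q) by (apply t_pos; auto).
  eapply Rle_trans. apply Rmult_le_compat_l. left; apply Rinv_0_lt_compat, pow_lt; auto. exact H.
  right. unfold y.
  assert (E2 : t q ^ 2 = sqrt (INR q)) by (unfold t; apply p4_sq; lra).
  replace (t q ^ 12) with ((t q ^2)^6) by ring. replace (t q ^ 6) with ((t q ^2)^3) by ring. rewrite E2.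
  assert (Ez : z = sqrt z * sqrt z) by (rewrite sqrt_sqrt; lra).
  replace (z * sqrt z) with (sqrt z * sqrt z * sqrt z) by (rewrite <- Ez; reflexivity).
  field. nz2.
Qed.

Lemma sum_q M : sumR M (fun q => / t q ^ 6) <= 6.
Proof. change (sumR M (fun c => if (fun _ => true) c then / t c ^ 6 else 0) <= 6).
  apply (sum_uc M (fun _ => true) (fun c => / t c ^ 6) (fun c => 6 * / t c ^ 2)); auto.
  - intros c Hc. pose proof (T3 c Hc). lra.
  - intros n Hn. pose proof (t_pos n Hn). assert (0 < / t n ^2) by (apply Rinv_0_lt_compat, pow_lt; auto). lra.
  - intros n Hn _. pose proof (t_ge1 n Hn). assert (1 <= t n ^2) by nra.
    assert (/ t n ^2 <= 1) by (rewrite <- Rinv_1; apply inv_le; lra). lra.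
  - lra.
Qed.
Open Scope R_scope.

Lemma term_nonneg z a b c d : 0 < z -> 0 <= term z a b c d.
Proof. intros Hz. unfold term.
  assert (wn : forall n, 0 <= wt z n).
  { intros n. unfold wt. apply Rmin_glb; [|lra]. apply Rmult_le_pos. apply sqrt_pos.
    left; apply Rinv_0_lt_compat, sqrt_lt_R0; auto. }
  apply Rmult_le_pos. left; apply Rinv_0_lt_compat; unfold Rpower; apply exp_pos.
  repeat apply Rmult_le_pos; auto.
Qed.

Definition enc (p : nat * (nat * nat * nat * nat)) : nat * nat * nat * nat :=
  let q := fst p in let x := snd p in
  (((q * (fst (fst (fst x)) * fst (fst (fst x))), q * (snd (fst (fst x)) * snd (fst (fst x)))),
     q * (snd (fst x) * snd (fst x))), q * (snd x * snd x))%nat.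

Theorem lemma4p4 :
  exists C : R, 0 < C /\
    forall z u : R, 10 <= z -> z < u ->
      Rabs (c_zu z u) <= C * Rpower z (-(3/2)).
Proof.
  exists 6144. split. lra. intros z u Hz Hu. assert (Hz0 : 0 < z) by lra.
  unfold c_zu. cbv zeta. set (M := Z.to_nat (up u)).
  rewrite (sum4_eq M (fun a b c d => if admissible u a b c d then term z a b c d else 0)).
  set (F' := fun x : nat * nat * nat * nat => if admissible u (fst (fst (fst x))) (snd (fst (fst x))) (snd (fst x)) (snd x)
              then term z (fst (fst (fst x))) (snd (fst (fst x))) (snd (fst x)) (snd x) else 0).
  assert (F'0 : forall x, 0 <= F' x). { intros x; unfold F'. destruct admissible; [apply term_nonneg; auto| lra]. }
  rewrite Rabs_right by (apply Rle_ge, lsum_nonneg; auto).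
  set (L5 := list_prod (seq 1 M) (L4 M)).
  set (G' := fun p : nat * (nat * nat * nat * nat) => Gq z (fst p) (fst (fst (fst (snd p)))) (snd (fst (fst (snd p)))) (snd (fst (snd p))) (snd (snd p))).
  assert (ex_phi : forall x, exists y, (In x (L4 M) -> F' x <> 0 -> In y L5 /\ x = enc y /\ F' x <= G' y)).
  { intros x. destruct (classic (In x (L4 M) /\ F' x <> 0)) as [[Hin HF]|Hn].
    - destruct x as [[[a b] c] d]. unfold F' in HF; simpl in HF.
      destruct (admissible u a b c d) eqn:Ha; [|lra].
      pose proof Ha as Ha'. unfold admissible in Ha'.
      apply andb_prop in Ha' as [Ha' N4]. apply andb_prop in Ha' as [Ha' N3]. apply andb_prop in Ha' as [_ Heq].
      revert Heq. destruct (Req_EM_T (sqrt (INR a) + sqrt (INR b)) (sqrt (INR c) + sqrt (INR d))) as [Eq|_]; [intros _|discriminate].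
      apply Bool.negb_true_iff, Nat.eqb_neq in N3. apply Bool.negb_true_iff, Nat.eqb_neq in N4.
      unfold L4 in Hin. rewrite !in_prod_iff, !in_seq in Hin.
      destruct Hin as [[[Ia Ib] Ic] Id].
      destruct (structure a b c d ltac:(lia) ltac:(lia) ltac:(lia) ltac:(lia) Eq N3 N4)
        as [q [m1 [m2 [m3 [m4 [Hq [H1 [H2 [H3 [H4 [E1 [E2 [E3 [E4 E]]]]]]]]]]]]]].
      exists (q, (((m1, m2), m3), m4)). intros _ _. split; [|split].
      + assert (q <= a)%nat by (rewrite E1; assert (1 <= m1*m1)%nat by nia; nia).
        assert (m1 <= a)%nat by (rewrite E1; nia). assert (m2 <= b)%nat by (rewrite E2; nia).
        assert (m3 <= c)%nat by (rewrite E3; nia). assert (m4 <= d)%nat by (rewrite E4; nia).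
        unfold L5, L4. rewrite !in_prod_iff, !in_seq. repeat split; lia.
      + unfold enc; simpl. subst; reflexivity.
      + unfold F', G', Gq; simpl. rewrite Ha. rewrite (proj2 (Nat.eqb_eq _ _) E). subst; lra.
    - exists (0%nat, (((0%nat, 0%nat), 0%nat), 0%nat)). intros A B; exfalso; tauto. }
  set (phi := fun x => proj1_sig (constructive_indefinite_description _ (ex_phi x))).
  assert (Hphi : forall x, In x (L4 M) -> F' x <> 0 -> In (phi x) L5 /\ x = enc (phi x) /\ F' x <= G' (phi x)).
  { intros x. unfold phi. destruct (constructive_indefinite_description _ (ex_phi x)); simpl; auto. }
  apply Rle_trans with (lsum L5 G').
  { apply (lsum_inj (L4 M) L5 F' G' phi).
    - apply NoDup_L4.
    - apply NoDup_prod. apply seq_NoDup. apply NoDup_L4.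
    - auto.
    - intros y _. unfold G', Gq. destruct Nat.eqb; [apply term_nonneg; auto| lra].
    - intros x Hx HF. destruct (Hphi x Hx HF) as [A [_ B]]. auto.
    - intros x x' Hx Hx' HF HF' Ep. destruct (Hphi x Hx HF) as [_ [A _]]. destruct (Hphi x' Hx' HF') as [_ [B _]].
      rewrite A, B, Ep. reflexivity. }
  assert (E5 : lsum L5 G' = sumR M (fun q => sumR M (fun a => sumR M (fun b => sumR M (fun c => sumR M (fun d => Gq z q a b c d)))))).
  { transitivity (lsum (seq 1 M) (fun q => lsum (L4 M) (fun x => Gq z q (fst (fst (fst x))) (snd (fst (fst x))) (snd (fst x)) (snd x)))).
    - symmetry. exact (lsum_prod (seq 1 M) (L4 M) (fun q x => Gq z q (fst (fst (fst x))) (snd (fst (fst x))) (snd (fst x)) (snd x))).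
    - rewrite <- sumR_lsum. apply sumR_ext; intros q _. symmetry. exact (sum4_eq M (Gq z q)). }
  rewrite E5.
  apply Rle_trans with (sumR M (fun q => 1024 / (z * sqrt z) * / t q ^ 6)).
  { apply sumR_le. intros q Hq. apply per_q; auto; lia. }
  rewrite sumR_scal.
  assert (Psz : 0 < sqrt z) by (apply sqrt_lt_R0; auto).
  assert (ER : Rpower z (-(3/2)) = / (z * sqrt z)).
  { rewrite Rpower_Ropp. f_equal. replace (3/2) with (1 + /2) by field. rewrite Rpower_plus, Rpower_1, Rpower_sqrt; auto. }
  rewrite ER. pose proof (sum_q M).
  assert (0 < 1024 / (z * sqrt z)) by (apply Rdiv_lt_0_compat; [lra| apply Rmult_lt_0_compat; auto]).
  assert (1024 / (z * sqrt z) * sumR M (fun q => / t q ^ 6) <= 1024 / (z * sqrt z) * 6) by (apply Rmult_le_compat_l; lra).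
  replace (6144 * / (z * sqrt z)) with (1024 / (z * sqrt z) * 6) by (field; split; apply Rgt_not_eq; lra).
  auto.
Qed.
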